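(* Let $N\ge1$. Let $f_{\mathrm{prod}}:\mathbb{N}^N\to\mathbb{N}$ be $f_{\mathrm{prod}}(\mathbf{s})=s_1s_2\cdots s_N$, and let $g:\mathbb{N}^N\to\mathbb{N}$ be the indicator function of $\{1,2\}^N=\{(s_1,\dots,s_N): s_i\in\{1,2\}\}$. Then for every integer $\ell>0$, $$c_{f_{\mathrm{prod}}}(\ell\mathbf{1})=c_g((2\ell-1)\mathbf{1}),$$ where $\mathbf{1}=(1,\dots,1)\in\mathbb{N}^N$.
   Context: $\mathbb{N}=\{0,1,2,\dots\}$. For $h:\mathbb{N}^N\to\mathbb{N}$ with $h(\mathbf{0})=0$, $k\ge0$ and $\mathbf{x}\in\mathbb{N}^N$, $\binom{k}{\mathbf{x}}_h=\sum_{\mathbf{m}_1+\cdots+\mathbf{m}_k=\mathbf{x}} h(\mathbf{m}_1)\cdots h(\mathbf{m}_k)$ over tuples of vectors in $\mathbb{N}^N$, and $c_h(\mathbf{x})=\sum_{k\ge0}\binom{k}{\mathbf{x}}_h$ (the number of $h$-weighted vector compositions of $\mathbf{x}$, where a part $\mathbf{m}$ can take one of $h(\mathbf{m})$ colors). *)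

(* Defs.v *)
From mathcomp Require Import all_boot.
Set Implicit Arguments. Unset Strict Implicit. Unset Printing Implicit Defensive.

Definition vec (n : nat) := 'I_n -> nat.

Definition vtot n (x : vec n) : nat := \sum_(i < n) x i.

Definition vle n (m x : vec n) : bool := [forall i, m i <= x i].

Definition vconst n (c : nat) : vec n := fun _ => c.

(* binom k x h = sum over (m_1,...,m_k) with m_1+...+m_k = x of
   h(m_1)...h(m_k).  The finite index
   {ffun 'I_n -> 'I_(vtot x).+1} covers every m <= x. *)
Fixpoint hbinom n (h : vec n -> nat) (k : nat) (x : vec n) : nat :=
  match k with
  | 0 => [forall i, x i == 0]
  | k'.+1 => \sum_(m : {ffun 'I_n -> 'I_(vtot x).+1}
                   | vle (fun i => nat_of_ord (m i)) x)
               h (fun i => nat_of_ord (m i)) *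
               hbinom h k' (fun i => x i - m i)
  end.

(* c_h(x) = sum_{k >= 0} binom k x h.  Under the standing assumption
   h(0) = 0, every term with k > |x| (total size) vanishes, since some
   part m_j must be 0; so the series is the finite sum below. *)
Definition comp_count n (h : vec n -> nat) (x : vec n) : nat :=
  \sum_(k < (vtot x).+2) hbinom h k x.

Definition f_prod n : vec n -> nat := fun s => \prod_(i < n) s i.

Definition g_ind n : vec n -> nat :=
  fun s => [forall i, (s i == 1) || (s i == 2)].

(* Main.v *)
Require Import Defs.
From mathcomp Require Import all_boot.
From mathcomp Require Import zify.

Fixpoint b1 (w : nat -> nat) (k n : nat) : nat :=
  match k with
  | 0 => n == 0
  | k'.+1 => \sum_(j < n.+1) w j * b1 w k' (n - j)
  end.

Lemma forall_prod n (P : 'I_n -> bool) :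
  nat_of_bool [forall i, P i] = \prod_(i < n) nat_of_bool (P i).
Proof.
case: (boolP [forall i, P i]) => H.
  by rewrite big1 // => i _; move/forallP: H => /(_ i) ->.
move/forallPn: H => [i Hi]; by rewrite (bigD1 i) //= (negbTE Hi) mul0n.
Qed.

Lemma le_vtot n (x : vec n) i : x i <= vtot x.
Proof. by rewrite /vtot (bigD1 i) //= leq_addr. Qed.

Lemma hbinom_prod n (h : vec n -> nat) w
  (Hh : forall m, h m = \prod_(i < n) w (m i)) k :
  forall x, hbinom h k x = \prod_(i < n) b1 w k (x i).
Proof.
elim: k => [|k IH] x /=; first exact: forall_prod.
set M := (vtot x).+1.
pose F := fun (i : 'I_n) (j : 'I_M) =>
  if (j : nat) < (x i).+1 then w j * b1 w k (x i - j) else 0.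
transitivity (\sum_(m : {ffun 'I_n -> 'I_M}) \prod_(i < n) F i (m i)).
  rewrite big_mkcond /=; apply: eq_bigr => m _.
  rewrite Hh IH -big_split /=.
  case: (boolP (vle _ _)) => H.
    apply: eq_bigr => i _; rewrite /F ltnS.
    by move/forallP: H => /(_ i) ->.
  move/forallPn: H => [i Hi]; rewrite (bigD1 i) //= /F ltnS (negbTE Hi).
  by rewrite mul0n.
rewrite -bigA_distr_bigA /=; apply: eq_bigr => i _.
rewrite (big_ord_widen M (fun j => w j * b1 w k (x i - j))); last first.
  by rewrite /M ltnS le_vtot.
by rewrite [RHS]big_mkcond /=; apply: eq_bigr => j _; rewrite /F.
Qed.

Lemma hockey k n : \sum_(t < n.+1) 'C(t + k, k.*2.+1) = 'C(n + k.+1, k.*2.+2).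
Proof.
elim: n => [|n IH].
  by rewrite big_ord1 /= !bin_small //; lia.
rewrite big_ord_recr /= IH.
have -> : n.+1 + k.+1 = (n + k.+1).+1 by lia.
by rewrite binS addnS addSn.
Qed.

Lemma sumA k n :
  \sum_(j < n.+1) j * 'C(n - j + k, k.*2.+1) = 'C(n + k.+1, k.*2.+3).
Proof.
elim: n => [|n IH].
  by rewrite big_ord1 /= mul0n bin_small //; lia.
rewrite big_ord_recl /= mul0n add0n.
under eq_bigr => j _ do rewrite /bump /= add1n subSS mulSn.
rewrite big_split /= IH.
rewrite (reindex_inj rev_ord_inj) /=.
rewrite (eq_bigr (fun j : 'I_n.+1 => 'C(j + k, k.*2.+1))); last first.
  by move=> j _; rewrite subSS subKn // -ltnS.
rewrite hockey.
have -> : n.+1 + k.+1 = (n + k.+1).+1 by lia.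
by rewrite binS addnC.
Qed.

Lemma b1S w k n : b1 w k.+1 n = \sum_(j < n.+1) w j * b1 w k (n - j).
Proof. by []. Qed.

Definition wA (j : nat) := j.
Definition wB (j : nat) : nat := (j == 1) || (j == 2).

Lemma A_closed k n : b1 wA k.+1 n = 'C(n + k, k.*2.+1).
Proof.
elim: k n => [|k IH] n.
  rewrite /= big_ord_recr /= subnn /wA muln1 big1 ?addn0 ?bin1 //.
  move=> j _; apply/eqP; rewrite muln_eq0; apply/orP; right.
  by rewrite eqb0 subn_eq0 -ltnNge ltn_ord.
rewrite b1S.
under eq_bigr => j _ do rewrite IH /wA.
by rewrite sumA.
Qed.

Lemma B_closed k n : b1 wB k n = if k <= n then 'C(k, n - k) else 0.
Proof.
elim: k n => [|k IH] n.
  by rewrite /= subn0; case: n.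
case: n => [|[|n]].
- by rewrite /= big_ord1.
- rewrite b1S big_ord_recl big_ord1 !IH /wB /bump /=.
  by case: k {IH}.
rewrite b1S 3!big_ord_recl big1 ?addn0; last first.
  move=> j _; rewrite /wB /=.
  by rewrite /bump /=; case: (nat_of_ord j).
rewrite !IH /bump /= mul0n add0n !mul1n !subSS !subn0 ltnS.
case: (ltngtP k n) => H.
- have -> : (k <= n.+1) = true by lia.
  have -> : n.+1 - k = (n - k).+1 by lia.
  by rewrite binS addnC.
- case: (ltnP n.+1 k) => H2.
    by [].
  have Hk : k = n.+1 by lia.
  by subst k; rewrite subnn !bin0.
- subst k. by rewrite leqnSn subSn // subnn bin0 bin1.
Qed.

Lemma AB l j : 0 < l -> b1 wA j l = b1 wB (l.-1 + j) (l.*2.-1).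
Proof.
move=> hl; rewrite B_closed.
case: j => [|k].
  rewrite /= addn0; have -> : (l.-1 <= l.*2.-1) = true by lia.
  rewrite bin_small; [by case: l hl | lia].
rewrite A_closed.
case: (ltnP k l) => H.
  have -> : (l.-1 + k.+1 <= l.*2.-1) = true by lia.
  have -> : l.*2.-1 - (l.-1 + k.+1) = (l + k) - k.*2.+1 by lia.
  have -> : l.-1 + k.+1 = l + k by lia.
  by rewrite bin_sub //; lia.
have -> : (l.-1 + k.+1 <= l.*2.-1) = false by lia.
by rewrite bin_small //; lia.
Qed.

Lemma A_van l j : l < j -> b1 wA j l = 0.
Proof. case: j => [//|k] H; rewrite A_closed bin_small //; lia. Qed.

Lemma B_van l k : k < l.-1 -> b1 wB k (l.*2.-1) = 0.
Proof. move=> H; rewrite B_closed; case: ifP => // _; rewrite bin_small //; lia. Qed.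

Lemma sum_trunc (F : nat -> nat) a c : c <= a -> (forall j, c <= j -> F j = 0) ->
  \sum_(j < a) F j = \sum_(j < c) F j.
Proof.
move=> H HF; rewrite -!(big_mkord xpredT) (@big_cat_nat _ _ _ c 0 a _ _ (leq0n c) H) /=.
rewrite [X in _ + X]big1_seq ?addn0 // => j /andP[_].
by rewrite mem_index_iota => /andP[Hj _]; exact: HF.
Qed.

Lemma vtot_const N c : vtot (@vconst N c) = N * c.
Proof. by rewrite /vtot /vconst sum_nat_const card_ord. Qed.

Lemma cc_pow N (h : vec N -> nat) w (Hh : forall m, h m = \prod_(i < N) w (m i)) c :
  comp_count h (vconst c) = \sum_(k < (N * c).+2) (b1 w k c) ^ N.
Proof.
rewrite /comp_count vtot_const; apply: eq_bigr => k _.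
by rewrite (@hbinom_prod _ _ _ Hh) /vconst prod_nat_const card_ord.
Qed.

Theorem theorem16 (N : nat) (hN : 1 <= N) (l : nat) (hl : 0 < l) :
  comp_count (@f_prod N) (@vconst N l) =
  comp_count (@g_ind N) (@vconst N (2 * l - 1)).
Proof.
rewrite (@cc_pow N _ wA) // (@cc_pow N _ wB); last first.
  by move=> m; rewrite /g_ind forall_prod.
have -> : 2 * l - 1 = l.*2.-1 by lia.
have h1 : l.*2.-1 <= N * l.*2.-1 by rewrite leq_pmull.
have h2 : l <= N * l by rewrite leq_pmull.
set M := (N * l.*2.-1).+2.
rewrite -(big_mkord xpredT (fun k => b1 wB k l.*2.-1 ^ N)) (@big_cat_nat _ _ _ l.-1 0 M _ _ (leq0n l.-1)) /=; last by rewrite /M; lia.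
rewrite [X in _ = X + _]big1_seq ?add0n; last first.
  move=> k /andP[_]; rewrite mem_index_iota => /andP[_ Hk].
  by rewrite B_van // exp0n.
rewrite -{1}(add0n l.-1) big_addn big_mkord.
rewrite (@sum_trunc (fun j => b1 wA j l ^ N) (N * l).+2 l.+1); last first.
- by move=> j Hj; rewrite A_van // exp0n.
- lia.
rewrite (@sum_trunc (fun j => b1 wB (j + l.-1) l.*2.-1 ^ N) (M - l.-1) l.+1); last first.
- by move=> j Hj; rewrite addnC -AB // A_van // exp0n.
- rewrite /M; lia.
by apply: eq_bigr => j _; rewrite addnC -AB.
Qed.
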